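(* Let $n\in\mathbb{N}_0\cup\{\infty\}$. If $n=0$, let $U=X$ be a topological space; if $n\ge 1$, let $X$ be a locally convex space over $\mathbb{K}$ and $U\subseteq X$ an open subset. Let $E_1,E_2,F$ be locally convex spaces, $\beta\colon E_1\times E_2\to F$ a bilinear map and $f\colon U\to E_1\times E_2$ a $C^n_{\mathbb{K}}$-map (for $n=0$: a continuous map). Assume that at least one of the following holds: (a) $X$ is metrizable and $\beta$ is sequentially continuous; or (b) $X$ is a $k^\infty$-space and $\beta$ is hypocontinuous in the second argument with respect to a set $\mathcal{S}$ of bounded subsets of $E_2$ which contains all compact subsets of $E_2$. Then $\beta\circ f\colon U\to F$ is $C^n_{\mathbb{K}}$.
   Context: $\mathbb{K}\in\{\mathbb{R},\mathbb{C}\}$; spaces serving as domain or range of differentiable maps are Hausdorff. Keller's $C^n$-maps: for $U\subseteq E$ open, $f\colon U\to F$ is $C^0_{\mathbb{K}}$ if continuous; $C^1_{\mathbb{K}}$ if continuous, the limit $df(x,y)=\lim_{t\to0}\frac{f(x+ty)-f(x)}{t}$ ($0\ne t\in\mathbb{K}$) exists for all $x\in U$, $y\in E$, and $df\colon U\times E\to F$ is continuous; $C^{n+1}_{\mathbb{K}}$ if $C^1_{\mathbb{K}}$ and $df$ is $C^n_{\mathbb{K}}$; $C^\infty_{\mathbb{K}}$ if $C^n_{\mathbb{K}}$ for all $n$. A Hausdorff space $X$ is a $k$-space if a subset $A\subseteq X$ is closed whenever $A\cap K$ is closed in $K$ for all compact $K\subseteq X$; $X$ is a $k^\infty$-space if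 it is Hausdorff and $X^n$ is a $k$-space for every $n\in\mathbb{N}$. A bilinear $\beta$ is hypocontinuous in the second argument with respect to $\mathcal{S}$ if it is separately continuous and for each $M\in\mathcal{S}$ and $0$-neighbourhood $W\subseteq F$ there is a $0$-neighbourhood $V\subseteq E_1$ with $\beta(V\times M)\subseteq W$. *)

(* Defs.v *)
From HB Require Import structures.
From mathcomp Require Import all_boot all_order all_algebra.
From mathcomp Require Import all_classical all_reals all_analysis.
From mathcomp.real_closed Require Import complex.

Set Implicit Arguments.
Unset Strict Implicit.
Unset Printing Implicit Defensive.

Import Order.TTheory GRing.Theory Num.Theory.
Import numFieldNormedType.Exports.
Local Open Scope classical_set_scope.
Local Open Scope ring_scope.

Definition KK (R : realType) (c : bool) : numFieldType :=
  if c then (R[i] : numFieldType) else (R : numFieldType).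

Inductive ninf := Fin of nat | Inf.

Section keller.
Variable (K : numFieldType).

Definition dirderiv (E F : tvsType K) (f : E -> F) (x y : E) (v : F) : Prop :=
  (fun t : K => t^-1 *: (f (x + t *: y) - f x)) @ (0 : K)^' --> v.

(* Keller C^n on U (for maps defined on U, represented by total maps whose
   values outside U are irrelevant). *)
Fixpoint isCk (n : nat) : forall (E F : tvsType K), set E -> (E -> F) -> Prop :=
  match n with
  | 0 => fun E F U f => {within U, continuous f}
  | m.+1 => fun E F U f =>
      {within U, continuous f} /\
      exists df : (E * E)%type -> F,
        (forall x, U x -> forall y, dirderiv f x y (df (x, y))) /\
        @isCk m (E * E)%type F (U `*` setT) df
  end.

Definition isCn (n : ninf) (E F : tvsType K) (U : set E) (f : E -> F) : Prop :=
  match n with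
  | Fin k => isCk k U f
  | Inf => forall k, isCk k U f
  end.

Definition bilinear_map (E1 E2 F : tvsType K) (b : E1 -> E2 -> F) : Prop :=
  (forall y (a : K) x x', b (a *: x + x') y = a *: b x y + b x' y) /\
  (forall x (a : K) y y', b x (a *: y + y') = a *: b x y + b x y').

Definition tvs_bounded (E : tvsType K) (B : set E) : Prop :=
  forall W : set E, nbhs (0 : E) W ->
    exists2 s : K, 0 < s & forall t : K, s < `|t| -> B `<=` (fun z => t *: z) @` W.

Definition seq_continuous2 (E1 E2 F : tvsType K) (b : E1 -> E2 -> F) : Prop :=
  forall (u : nat -> (E1 * E2)%type) (p : (E1 * E2)%type),
    u @ \oo --> p -> (fun k => b (u k).1 (u k).2) @ \oo --> b p.1 p.2.

Definition hypocontinuous2 (E1 E2 F : tvsType K) (S : set (set E2))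
    (b : E1 -> E2 -> F) : Prop :=
  (forall x, continuous (b x)) /\ (forall y, continuous (fun x => b x y)) /\
  (forall M W, S M -> nbhs (0 : F) W ->
     exists2 V : set E1, nbhs (0 : E1) V &
       forall x y, V x -> M y -> W (b x y)).
End keller.

Definition metrizable (R : realType) (X : topologicalType) : Prop :=
  exists d : X -> X -> R,
    [/\ forall x y, 0 <= d x y,
        forall x y, d x y = 0 <-> x = y,
        forall x y, d x y = d y x,
        forall x y z, d x z <= d x y + d y z &
        forall (x : X) (A : set X),
          nbhs x A <-> exists2 e : R, 0 < e & [set y | d x y < e] `<=` A].

Definition k_space (X : topologicalType) : Prop :=
  hausdorff_space X /\
  forall A : set X,
    (forall C : set X, compact C ->
       exists D : set X, closed D /\ A `&` C = D `&` C) ->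
    closed A.

(* [tpow X n] is X^(n+1) *)
Fixpoint tpow (X : topologicalType) (n : nat) : topologicalType :=
  match n with 0 => X | m.+1 => (tpow X m * X)%type end.

(* X is Hausdorff and X^n is a k-space for every n >= 1 (X^0 is a point) *)
Definition k_infty_space (X : topologicalType) : Prop :=
  hausdorff_space X /\ forall n, k_space (tpow X n).

(* Main.v *)
Require Import Defs.
From HB Require Import structures.
From mathcomp Require Import all_boot all_order all_algebra.
From mathcomp Require Import all_classical all_reals all_analysis.
From mathcomp.real_closed Require Import complex.
Import Order.TTheory GRing.Theory Num.Theory.
Import numFieldNormedType.Exports.
Local Open Scope classical_set_scope.
Local Open Scope ring_scope.
Set Implicit Arguments.
Unset Strict Implicit.
Unset Printing Implicit Defensive.
Section cbase.
Definition cbase {T : Type} (F : set_system T) (B : nat -> set T) :=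
  [/\ forall n, F (B n), forall n, B n.+1 `<=` B n &
      forall A, F A -> exists n, B n `<=` A].

Lemma cbase_mono {T : Type} (F : set_system T) B : cbase F B ->
  forall m n, (m <= n)%N -> B n `<=` B m.
Proof.
move=> [_ Hd _] m n /subnK <-; elim: (n - m)%N => [|k IH] //=.
by rewrite addSn; apply: subset_trans (Hd _) IH.
Qed.

Lemma cbase_seq {T : Type} (F : set_system T) B (s : nat -> T) :
  cbase F B -> (forall n, B n (s n)) -> forall A, F A -> \forall n \near \oo, A (s n).
Proof.
move=> cB Bs A FA; have [_ _ /(_ A FA) [m BmA]] := cB.
exists m => // n /= mn; apply: BmA; exact: (cbase_mono cB mn (Bs n)).
Qed.

Lemma cbase_cvg {T : Type} {Z : topologicalType} (F : set_system T) B
    (phi : T -> Z) (l : Z) : Filter F -> cbase F B ->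
  (forall s : nat -> T, (forall n, B n (s n)) -> phi (s n) @[n --> \oo] --> l) ->
  phi @ F --> l.
Proof.
move=> FF cB Hs W Wl; apply: contrapT => nFW.
have : forall n, exists t, B n t /\ ~ W (phi t).
  move=> n; apply: contrapT => H; apply: nFW.
  have [BF _ _] := cB; suff : F (phi @^-1` W) by [].
  apply: filterS (BF n) => t Bt.
  by apply: contrapT => nW; apply: H; exists t.
move=> /choice [s Hs']; have := Hs s (fun n => (Hs' n).1) W Wl.
move=> [m _ Hm]; exact: (Hs' m).2 (Hm m (leqnn m)).
Qed.
End cbase.

Definition FC (X : topologicalType) := forall x : X, exists B, cbase (nbhs x) B.

Lemma FC_seq_cont (X Z : topologicalType) (g : X -> Z) (x : X) : FC X ->
  (forall u : nat -> X, u n @[n --> \oo] --> x -> g (u n) @[n --> \oo] --> g x) ->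
  {for x, continuous g}.
Proof.
move=> /(_ x) [B cB] H; apply: (cbase_cvg _ cB) => s Bs; apply: H.
by move=> A /(cbase_seq cB Bs).
Qed.

Lemma FC_prod (X Y : topologicalType) : FC X -> FC Y -> FC (X * Y)%type.
Proof.
move=> FX FY [x y]; have [B1 [B1n B1d B1A]] := FX x; have [B2 [B2n B2d B2A]] := FY y.
exists (fun n => B1 n `*` B2 n); split.
- move=> n; apply: (@ex_intro2 _ _ _ (B1 n, B2 n)) => //; split; [exact: B1n|exact: B2n].
- by move=> n [a b] [/= ? ?]; split; [exact: B1d|exact: B2d].
- move=> A [[P Q] [/= /B1A [n1 H1] /B2A [n2 H2]] PQA]; exists (maxn n1 n2).
  move=> [a b] [/= Ha Hb]; apply: PQA; split.
    by apply: H1; apply: (cbase_mono (And3 B1n B1d B1A) (leq_maxl n1 n2)).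
  by apply: H2; apply: (cbase_mono (And3 B2n B2d B2A) (leq_maxr n1 n2)).
Qed.

Lemma metrizable_FC (R : realType) (X : topologicalType) : metrizable R X -> FC X.
Proof.
move=> [d [d0 dE dC dT dN]] x.
exists (fun n => [set y | d x y < n.+1%:R^-1]); split.
- move=> n; apply: (proj2 (dN x _)); exists n.+1%:R^-1 => //; by rewrite invr_gt0.
- move=> n y /= H; apply: lt_le_trans H _.
  by rewrite lef_pV2 ?posrE // ler_nat.
- move=> A /dN [e e0 HA].
  have [m _ Hm] := near_infty_natSinv_lt (PosNum e0).
  exists m => y /= H; apply: HA => /=; apply: lt_trans H _; exact: (Hm m (leqnn m)).
Qed.

Definition kprop (X : topologicalType) := forall A : set X,
  (forall C, compact C -> exists D, closed D /\ A `&` C = D `&` C) -> closed A.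

Definition homeo {X Y : topologicalType} (h : X -> Y) :=
  exists hinv : Y -> X, [/\ continuous h, continuous hinv, cancel h hinv & cancel hinv h].

Lemma kprop_homeo (X Y : topologicalType) (h : X -> Y) : homeo h -> kprop Y -> kprop X.
Proof.
move=> [g [ch cg hK gK]] kY A HA.
have cA' : closed (g @^-1` A).
  apply: kY => C' cC'.
  have cC : compact (g @` C') by apply: continuous_compact => //; exact: continuous_subspaceT.
  have [D [clD HD]] := HA _ cC.
  exists (g @^-1` D); split; first by move/continuous_closedP : cg; apply.
  apply/seteqP; split => y [Ay Cy].
    have : (A `&` g @` C') (g y) by split => //; exists y.
    by rewrite HD => -[].
  have : (D `&` g @` C') (g y) by split => //; exists y.
  by rewrite -HD => -[].
have -> : A = h @^-1` (g @^-1` A) by apply/seteqP; split => x /=; rewrite hK.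
by move/continuous_closedP : ch; apply.
Qed.

Lemma continuous_prodmap (X1 X2 Y1 Y2 : topologicalType) (h1 : X1 -> Y1) (h2 : X2 -> Y2) :
  continuous h1 -> continuous h2 -> continuous (fun p => (h1 p.1, h2 p.2)).
Proof.
move=> c1 c2 p; apply: cvg_pair.
  by apply: continuous_comp; [exact: cvg_fst|exact: c1].
by apply: continuous_comp; [exact: cvg_snd|exact: c2].
Qed.

Lemma homeo_id (X : topologicalType) : homeo (@id X).
Proof. by exists id; split => // x; apply: cvg_id. Qed.

Lemma homeo_comp (X Y Z : topologicalType) (f : X -> Y) (g : Y -> Z) :
  homeo f -> homeo g -> homeo (g \o f).
Proof.
move=> [f' [cf cf' fK f'K]] [g' [cg cg' gK g'K]]; exists (f' \o g'); split.
- by move=> x; apply: continuous_comp; [exact: cf|exact: cg].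
- by move=> x; apply: continuous_comp; [exact: cg'|exact: cf'].
- by move=> x /=; rewrite gK fK.
- by move=> x /=; rewrite f'K g'K.
Qed.

Lemma homeo_prod (X1 X2 Y1 Y2 : topologicalType) (h1 : X1 -> Y1) (h2 : X2 -> Y2) :
  homeo h1 -> homeo h2 -> homeo (fun p => (h1 p.1, h2 p.2)).
Proof.
move=> [g1 [c1 c1' K1 K1']] [g2 [c2 c2' K2 K2']].
exists (fun p => (g1 p.1, g2 p.2)); split; try exact: continuous_prodmap.
- by move=> [a b] /=; rewrite K1 K2.
- by move=> [a b] /=; rewrite K1' K2'.
Qed.

Lemma homeo_assoc (X Y Z : topologicalType) : homeo (@unstable.prodAr X Y Z).
Proof.
exists (@unstable.prodA X Y Z); split.
- exact: prodAr_continuous.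
- exact: prodA_continuous.
- by move=> [a [b c]].
- by move=> [[a b] c].
Qed.

Lemma tpow_prod (Y : topologicalType) (a b : nat) :
  exists m (h : (tpow Y a * tpow Y b)%type -> tpow Y m), homeo h.
Proof.
elim: b => [|b [m [h hh]]]; first by exists a.+1, id; exact: homeo_id.
exists m.+1, ((fun p => (h p.1, p.2)) \o @unstable.prodAr (tpow Y a) (tpow Y b) Y).
apply: homeo_comp; first exact: homeo_assoc.
by apply: (@homeo_prod _ _ _ _ h id) => //; exact: homeo_id.
Qed.

Definition KI (X : topologicalType) :=
  exists (Y : topologicalType) (n : nat) (h : X -> tpow Y n),
    homeo h /\ forall m, kprop (tpow Y m).

Lemma KI_prod (X : topologicalType) : KI X -> KI (X * X)%type.
Proof.
move=> [Y [n [h [hh kY]]]]; have [m [g hg]] := tpow_prod Y n n.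
exists Y, m, (g \o (fun p => (h p.1, h p.2))); split => //.
by apply: homeo_comp => //; exact: homeo_prod.
Qed.

Lemma KI_kprop (X : topologicalType) : KI X -> kprop X.
Proof. by move=> [Y [n [h [hh kY]]]]; apply: kprop_homeo hh (kY n). Qed.

Lemma compact_seq (T : topologicalType) (s : nat -> T) (l : T) :
  s n @[n --> \oo] --> l -> compact (range s `|` [set l]).
Proof.
move=> sl F PF FM; have [cl|ncl] := pselect (cluster F l).
  by exists l; split => //; right.
have [A [V [FA Vl AV]]] : exists A V, [/\ F A, nbhs l V & A `&` V = set0].
  apply: contrapT => H; apply: ncl => A V FA Vl; apply: contrapT => nAV.
  apply: H; exists A, V; split => //; apply/seteqP; split => // x Hx.
  by apply: nAV; exists x.
have [N _ HN] := sl V Vl.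
pose Fin := [set s n | n in `I_N].
have FFin : F Fin.
  apply: filterS (filterI FA FM) => x [Ax [[n _ sx]|lx]].
    subst x; have [nN|Nn] := ltnP n N; first by exists n.
    have HV : V (s n) by apply: HN.
    have : (A `&` V) (s n) := conj Ax HV.
    by rewrite AV.
  have : (A `&` V) x by split => //; rewrite lx; exact: nbhs_singleton.
  by rewrite AV.
have [a [[n _ <-] ca]] := finite_compact (finite_image s (finite_II N)) PF FFin.
by exists (s n); split => //; left; exists n.
Qed.

Section tvs_lemmas.
Context {K : numFieldType}.

Lemma cvgDt {T : Type} {F : tvsType K} (G : set_system T) {FG : Filter G}
    (f g : T -> F) (a c : F) :
  f @ G --> a -> g @ G --> c -> (fun x => f x + g x) @ G --> a + c.
Proof.
move=> fa gc.
apply: (@continuous2_cvg _ _ _ _ _ _ f g (fun x y => x + y)) => //.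
exact: (@add_continuous F (a, c)).
Qed.

Lemma cvgBt {T : Type} {F : tvsType K} (G : set_system T) {FG : Filter G}
    (f g : T -> F) (a c : F) :
  f @ G --> a -> g @ G --> c -> (fun x => f x - g x) @ G --> a - c.
Proof.
move=> fa gc.
apply: (@continuous2_cvg _ _ _ _ _ _ f g (fun x y => x - y)) => //.
exact: (@sub_continuous F (a, c)).
Qed.

Lemma cvg_fstt {T : Type} {E1 E2 : topologicalType} (G : set_system T) {FG : Filter G}
    (h : T -> (E1 * E2)%type) (p : (E1 * E2)%type) : h @ G --> p -> (h x).1 @[x --> G] --> p.1.
Proof. by move=> hp; apply: (cvg_comp _ _ hp); exact: cvg_fst. Qed.

Lemma cvg_sndt {T : Type} {E1 E2 : topologicalType} (G : set_system T) {FG : Filter G}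
    (h : T -> (E1 * E2)%type) (p : (E1 * E2)%type) : h @ G --> p -> (h x).2 @[x --> G] --> p.2.
Proof. by move=> hp; apply: (cvg_comp _ _ hp); exact: cvg_snd. Qed.

Context {E1 E2 F : tvsType K} (b : E1 -> E2 -> F) (bb : bilinear_map b).

Lemma bD1 x x' y : b (x + x') y = b x y + b x' y.
Proof. by have := bb.1 y 1 x x'; rewrite !scale1r. Qed.
Lemma b01 y : b 0 y = 0.
Proof. by have := bD1 0 0 y; rewrite addr0 => /(congr1 (fun z => z - b 0 y)); rewrite subrr addrK => ->. Qed.
Lemma bZ1 a x y : b (a *: x) y = a *: b x y.
Proof. by have := bb.1 y a x 0; rewrite addr0 b01 addr0. Qed.
Lemma bB1 x x' y : b (x - x') y = b x y - b x' y.
Proof. by rewrite -[in RHS](subrK x' x) (bD1 (x - x')) addrK. Qed.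
Lemma bD2 x y y' : b x (y + y') = b x y + b x y'.
Proof. by have := bb.2 x 1 y y'; rewrite !scale1r. Qed.
Lemma b02 x : b x 0 = 0.
Proof. by have := bD2 x 0 0; rewrite addr0 => /(congr1 (fun z => z - b x 0)); rewrite subrr addrK => ->. Qed.
Lemma bZ2 a x y : b x (a *: y) = a *: b x y.
Proof. by have := bb.2 x a y 0; rewrite addr0 b02 addr0. Qed.
Lemma bB2 x y y' : b x (y - y') = b x y - b x y'.
Proof. by rewrite -[in RHS](subrK y' y) (bD2 _ (y - y')) addrK. Qed.

Definition SC := seq_continuous2 b.

Lemma SC_cvg (T : Type) (G : set_system T) {FG : Filter G} B (h : T -> (E1 * E2)%type) (p : (E1 * E2)%type) :
  SC -> cbase G B -> h @ G --> p -> (fun t => b (h t).1 (h t).2) @ G --> b p.1 p.2.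
Proof.
move=> sc cB hp; apply: (cbase_cvg _ cB) => s Bs; apply: (sc (h \o s)).
apply: cvg_comp hp => A /(cbase_seq cB Bs); exact.
Qed.

Section hypo.
Context (S : set (set E2)) (hS : hypocontinuous2 S b).

Lemma hypo_cvg (T : Type) (G : set_system T) {FG : Filter G} (h : T -> (E1 * E2)%type) (p : (E1 * E2)%type) M :
  S M -> h @ G --> p -> (\forall t \near G, M (h t).2) ->
  (fun t => b (h t).1 (h t).2) @ G --> b p.1 p.2.
Proof.
move=> SM hp HM.
have -> : (fun t => b (h t).1 (h t).2) =
  (fun t => b ((h t).1 - p.1) (h t).2 + b p.1 (h t).2).
  by apply: funext => t; rewrite bB1 subrK.
rewrite -[b p.1 p.2]add0r; apply: cvgDt.
  move=> W W0; have [_ [_ H]] := hS; have [V V0 HV] := H M W SM W0.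
  have h1 : ((h t).1 - p.1) @[t --> G] --> 0.
    rewrite -(subrr p.1); apply: cvgBt; [exact: cvg_fstt|exact: cvg_cst].
  have HV1 : G (fun t => V ((h t).1 - p.1)) := h1 V V0.
  have HM' : G (fun t => M (h t).2) := HM.
  suff : G (fun t => W (b ((h t).1 - p.1) (h t).2)) by [].
  apply: filterS (filterI HV1 HM') => t [Vt Mt]; exact: HV.
have [H _] := hS.
apply: (cvg_comp _ _ (cvg_sndt hp)); exact: H.
Qed.

Lemma hypo_SC : (forall M, compact M -> S M) -> SC.
Proof.
move=> cS u p up.
apply: (@hypo_cvg _ _ _ u p (range (fun n => (u n).2) `|` [set p.2])) => //.
  apply: cS; apply: compact_seq; exact: cvg_sndt up.
by apply: nearW => n; left; exists n.
Qed.

Lemma cont_K (X : topologicalType) (U : set X) (g : X -> (E1 * E2)%type) :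
  kprop X -> (forall M, compact M -> S M) ->
  (forall x, U x -> exists N, [/\ nbhs x N, closed N & N `<=` U]) ->
  (forall x, U x -> {for x, continuous g}) ->
  forall x, U x -> {for x, continuous (fun x => b (g x).1 (g x).2)}.
Proof.
move=> kX cS regU cg x0 Ux0 W Wb.
set bg := fun x => b (g x).1 (g x).2.
have [N [Nx0 clN NU]] := regU x0 Ux0.
pose O := W°.
have oO : open O by exact: open_interior.
have Ob : O (bg x0) := Wb.
pose P := N `&` (bg @^-1` (~` O)).
have clP : closed P.
  apply: kX => C cC; exists (closure (P `&` C)); split; first exact: closed_closure.
  apply/seteqP; split => z.
    by move=> [Pz Cz]; split => //; apply: subset_closure.
  move=> [clz Cz].
  have Nz : N z.
    by apply: clN; apply: (closureS _ clz) => w [[Nw _] _].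
  split => //; split => //; move=> Oz.
  pose M := (fun x => (g x).2) @` (C `&` N).
  have cCN : compact (C `&` N) by exact: compact_closedI.
  have cM : compact M.
    apply: continuous_compact => //; apply: continuous_in_subspaceT => w.
    rewrite inE => -[_ Nw].
    by apply: continuous_comp; [exact: (cg w (NU w Nw))|exact: cvg_snd].
  have Hc : bg @ within (C `&` N) (nbhs z) --> bg z.
    apply: (@hypo_cvg _ _ _ g (g z) M (cS _ cM)).
      by move=> A /(cg z (NU z Nz)) /(cvg_within (C `&` N)).
    suff : nbhs z (fun t => (C `&` N) t -> M (g t).2) by []. by apply: filterE => t Ht; exists t.
  have := Hc O (open_nbhs_nbhs (conj oO Oz)).
  move=> /clz [w [[[Nw nOw] Cw] H]]; exact: nOw (H (conj Cw Nw)).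
have nPx0 : nbhs x0 (~` P).
  apply: open_nbhs_nbhs; split; first exact: closed_openC.
  by move=> [_].
suff : nbhs x0 (fun t => W (bg t)) by [].
apply: filterS (filterI Nx0 nPx0) => t [Nt nPt].
apply: contrapT => nW; apply: nPt; split => // Ot; apply: nW.
exact: nbhs_singleton Ot.
Qed.
End hypo.

Lemma cont_FC (X : topologicalType) (g : X -> (E1 * E2)%type) (x : X) :
  FC X -> SC -> {for x, continuous g} ->
  {for x, continuous (fun x => b (g x).1 (g x).2)}.
Proof.
move=> fX sc cg; apply: FC_seq_cont => // u ux.
apply: (sc (g \o u)); exact: cvg_comp ux cg.
Qed.
End tvs_lemmas.

Lemma open_XT (A B : topologicalType) (U : set A) : open U -> open (U `*` [set: B]).
Proof.
move=> oU; have -> : U `*` [set: B] = fst @^-1` U.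
  by apply/seteqP; split => [[x y] [] //|[x y] /= Ux].
by move: oU; apply: (proj1 (continuousP _)) => p; exact: cvg_fst.
Qed.

Section isCk_lemmas.
Context {K : numFieldType}.

Definition linP {A B : tvsType K} (P : A -> B) :=
  forall (a : K) x y, P (a *: x + y) = a *: P x + P y.

Lemma linP0 (A B : tvsType K) (P : A -> B) : linP P -> P 0 = 0.
Proof.
move=> HP; have e := HP 1 0 0; rewrite !scale1r addr0 in e.
by move/(congr1 (fun z => z - P 0)): e; rewrite subrr addrK => ->.
Qed.

Lemma linPZ (A B : tvsType K) (P : A -> B) a x : linP P -> P (a *: x) = a *: P x.
Proof. by move=> HP; have := HP a x 0; rewrite !addr0 linP0 // addr0. Qed.

Lemma linPB (A B : tvsType K) (P : A -> B) x y : linP P -> P (x - y) = P x - P y.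
Proof.
move=> HP; have := HP (-1) y x; rewrite !scaleN1r (addrC (- y)) (addrC (- P y)).
by [].
Qed.

Lemma linPD (A B : tvsType K) (P : A -> B) x y : linP P -> P (x + y) = P x + P y.
Proof. by move=> HP; have := HP 1 x y; rewrite !scale1r. Qed.

Lemma isCk_cont k (E F : tvsType K) (U : set E) (f : E -> F) :
  isCk k U f -> {within U, continuous f}.
Proof. by case: k => [|k] //= []. Qed.

Lemma isCk_mono k : forall (E F : tvsType K) (U : set E) (f : E -> F),
  isCk k.+1 U f -> isCk k U f.
Proof.
elim: k => [|k IH] E F U f.
  by move=> [cf _].
move=> [cf [df [Hd Hk]]]; split => //; exists df; split => //; exact: IH.
Qed.

Lemma isCk_postlin k : forall (E F G : tvsType K) (U : set E) (f : E -> F) (P : F -> G),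
  linP P -> continuous P -> isCk k U f -> isCk k U (P \o f).
Proof.
have Hc : forall (E F G : tvsType K) (U : set E) (f : E -> F) (P : F -> G),
    continuous P -> {within U, continuous f} -> {within U, continuous (P \o f)}.
  move=> E F G U f P cP cf x.
  exact: (@continuous_comp _ _ _ (from_subspace U f) P x (cf x) (cP _)).
elim: k => [|k IH] E F G U f P lP cP.
  exact: Hc.
move=> [cf [df [Hd Hk]]]; split; first exact: Hc.
exists (P \o df); split; last exact: IH.
move=> x Ux y; rewrite /dirderiv.
have -> : (fun t : K => t^-1 *: ((P \o f) (x + t *: y) - (P \o f) x)) =
    P \o (fun t : K => t^-1 *: (f (x + t *: y) - f x)).
  by apply: funext => t /=; rewrite (linPZ _ _ lP) (linPB _ _ lP).
exact: (continuous_cvg _ (cP _) (Hd x Ux y)).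
Qed.

Lemma isCk_pair k : forall (E F G : tvsType K) (U : set E) (f : E -> F) (g : E -> G),
  isCk k U f -> isCk k U g -> isCk k U (fun x => (f x, g x)).
Proof.
have Hc : forall (E F G : tvsType K) (U : set E) (f : E -> F) (g : E -> G),
    {within U, continuous f} -> {within U, continuous g} ->
    {within U, continuous (fun x => (f x, g x))}.
  by move=> E F G U f g cf cg x; apply: cvg_pair; [exact: cf|exact: cg].
elim: k => [|k IH] E F G U f g.
  exact: Hc.
move=> [cf [df [Hdf Hkf]]] [cg [dg [Hdg Hkg]]]; split; first exact: Hc.
exists (fun z => (df z, dg z)); split; last exact: IH.
move=> x Ux y; rewrite /dirderiv.
by apply: cvg_pair; [exact: Hdf|exact: Hdg].
Qed.

Lemma isCk_prelin k : forall (E' E F : tvsType K) (U : set E) (V : set E') (L : E' -> E)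
    (f : E -> F), linP L -> continuous L -> open U -> open V ->
  (forall z, V z -> U (L z)) -> isCk k U f -> isCk k V (f \o L).
Proof.
have Hc : forall (E' E F : tvsType K) (U : set E) (V : set E') (L : E' -> E)
    (f : E -> F), continuous L -> open U -> open V ->
    (forall z, V z -> U (L z)) -> {within U, continuous f} ->
    {within V, continuous (f \o L)}.
  move=> E' E F U V L f cL oU oV VU.
  rewrite !continuous_open_subspace // => cf z; rewrite inE => Vz.
  apply: continuous_comp; first exact: cL.
  by apply: cf; rewrite inE; exact: VU.
elim: k => [|k IH] E' E F U V L f lL cL oU oV VU.
  exact: Hc.
move=> [cf [df [Hd Hk]]]; split; first exact: (Hc _ _ _ U V L f cL oU oV VU cf).
exists (df \o (fun p => (L p.1, L p.2))); split.
  move=> z Vz w; rewrite /dirderiv.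
  have -> : (fun t : K => t^-1 *: ((f \o L) (z + t *: w) - (f \o L) z)) =
      (fun t : K => t^-1 *: (f (L z + t *: L w) - f (L z))).
    by apply: funext => t /=; rewrite (addrC z) lL (addrC (t *: L w)).
  exact: Hd (VU z Vz) (L w).
apply: (IH _ _ _ (U `*` setT)) => //.
- by move=> a p q /=; rewrite !lL.
- exact: continuous_prodmap.
- exact: open_XT.
- exact: open_XT.
- by move=> [p1 p2] [/= Vp _]; split => //; exact: VU.
Qed.

End isCk_lemmas.

Lemma archKK (R : realType) (c : bool) :
  forall e : KK R c, 0 < e -> exists n : nat, n.+1%:R^-1 < e.
Proof.
case: c => /= e e0.
  have e0' : 0 < complex.Re e by move: e0; rewrite ltcE => /andP[].
  have [m _ Hm] := near_infty_natSinv_lt (PosNum e0').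
  exists m; rewrite ltcE; move: e0; rewrite ltcE => /andP[/eqP -> _].
  rewrite -(rmorph_nat (@real_complex R)) -fmorphV /=.
  by rewrite eqxx /=; exact: (Hm m (leqnn m)).
have [m _ Hm] := near_infty_natSinv_lt (PosNum e0).
by exists m; exact: (Hm m (leqnn m)).
Qed.

Section deriv.
Context {K : numFieldType}.

Lemma cbase_dnbhs0 (archK : forall e : K, 0 < e -> exists n : nat, n.+1%:R^-1 < e) :
  cbase ((0 : K)^') (fun n => [set t : K | t != 0 /\ `|t| < n.+1%:R^-1]).
Proof.
split.
- move=> n; suff : nbhs (0 : K) (fun t => t != 0 -> t != 0 /\ `|t| < n.+1%:R^-1) by [].
  apply: (proj2 (@nbhs_norm0P K K _)); exists n.+1%:R^-1; first by rewrite /= invr_gt0.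
  by move=> t /= tlt tne; split => //; move: tlt; rewrite sub0r normrN.
- move=> n t [tne tlt]; split => //; apply: lt_le_trans tlt _.
  by rewrite lef_pV2 ?posrE // ler_nat.
- move=> A; rewrite /dnbhs /within /= => /nbhs_norm0P [e /= e0 H].
  have [n He] := archK e e0; exists n => t [tne tlt]; apply: H => //=.
  exact: lt_trans tlt He.
Qed.
End deriv.

Section main.
Context {K : numFieldType} {E1 E2 F : tvsType K} (b : E1 -> E2 -> F) (bb : bilinear_map b).
Context (archK : forall e : K, 0 < e -> exists n : nat, n.+1%:R^-1 < e).

Lemma lin_cvg0 (X : tvsType K) (x y : X) : (fun t : K => x + t *: y) @ (0 : K)^' --> x.
Proof.
have h : (fun t : K => x + t *: y) @ (nbhs (0 : K)) --> x + 0 *: y.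
  apply: (@continuous2_cvg _ _ _ _ _ _ (fun=> x) (fun t => t *: y) (fun u v => u + v)).
  - exact: (@add_continuous X (x, 0 *: y)).
  - exact: cvg_cst.
  - apply: (@continuous2_cvg _ K^o X X _ _ (fun t => t) (fun=> y) (fun u v => u *: v)).
    + exact: (@scale_continuous K X (0, y)).
    + exact: cvg_id.
    + exact: cvg_cst.
rewrite scale0r addr0 in h.
move=> A /h HA; exact: (@cvg_within K (nbhs (0:K)) _ (fun t : K => t != 0) _ HA).
Qed.

Lemma deriv_b (X : tvsType K) (f : X -> (E1 * E2)%type) (x y : X) (v : (E1 * E2)%type) :
  SC b -> {for x, continuous f} -> dirderiv f x y v ->
  dirderiv (fun x => b (f x).1 (f x).2) x y (b v.1 (f x).2 + b (f x).1 v.2).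
Proof.
move=> sc cf hq; rewrite /dirderiv.
have cB := cbase_dnbhs0 archK.
have hxt : (fun t : K => f (x + t *: y)) @ (0:K)^' --> f x.
  apply: (@continuous_cvg _ _ _ _ _ (fun t : K => x + t *: y) f x); [exact: cf|exact: lin_cvg0].
set q := fun t : K => t^-1 *: (f (x + t *: y) - f x).
have -> : (fun t : K => t^-1 *: (b (f (x + t *: y)).1 (f (x + t *: y)).2 - b (f x).1 (f x).2))
   = (fun t => b (q t).1 (f (x + t *: y)).2 + b (f x).1 (q t).2).
  apply: funext => t; rewrite /q /=.
  rewrite (bZ1 bb) (bZ2 bb) -scalerDr; congr (_ *: _).
  by rewrite (bB1 bb) (bB2 bb) addrA subrK.
apply: cvgDt.
  apply: (SC_cvg (h := fun t => ((q t).1, (f (x + t *: y)).2)) (p := (v.1, (f x).2)) sc cB).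
  by apply: cvg_pair; [exact: cvg_fstt hq|exact: cvg_sndt hxt].
apply: (SC_cvg (h := fun t => ((f x).1, (q t).2)) (p := ((f x).1, v.2)) sc cB).
by apply: cvg_pair; [exact: cvg_cst|exact: cvg_sndt hq].
Qed.

Definition Good (X : tvsType K) := (FC X /\ SC b) \/
  (KI X /\ exists S : set (set E2), (forall M, compact M -> S M) /\ hypocontinuous2 S b).

Lemma Good_prod (X : tvsType K) : Good X -> Good (X * X)%type.
Proof.
case=> [[fX sc]|[kX hS]]; [left|right]; split => //.
  exact: FC_prod.
exact: KI_prod.
Qed.

Lemma Good_SC (X : tvsType K) : Good X -> SC b.
Proof.
by case=> [[_ sc]|[_ [S [cS hS]]]] //; exact: (hypo_SC bb hS cS).
Qed.

Lemma cont_Good (X : tvsType K) (U : set X) (g : X -> (E1 * E2)%type) :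
  Good X -> open U -> {within U, continuous g} ->
  {within U, continuous (fun x => b (g x).1 (g x).2)}.
Proof.
move=> gX oU; rewrite !continuous_open_subspace // => cg x; rewrite inE => Ux.
have cgx : {for x, continuous g} by apply: cg; rewrite inE.
case: gX => [[fX sc]|[kX [S [cS hS]]]].
  exact: cont_FC.
apply: (cont_K bb hS (KI_kprop kX) cS _ _ Ux).
  move=> z Uz; have : nbhs z U by exact: open_nbhs_nbhs.
  move=> /uniform_regular [N Nz NU]; exists (closure N); split.
  - by apply: filterS Nz; exact: subset_closure.
  - exact: closed_closure.
  - exact: NU.
by move=> z Uz; apply: cg; rewrite inE.
Qed.

Lemma main_isCk k : forall (X : tvsType K) (U : set X) (f : X -> (E1 * E2)%type),
  Good X -> open U -> isCk k U f -> isCk k U (fun x => b (f x).1 (f x).2).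
Proof.
elim: k => [|k IH] X U f gX oU.
  exact: cont_Good.
move=> Hf; have [cf [df [Hd Hk]]] := Hf; have Hfk := isCk_mono Hf.
split; first exact: cont_Good.
pose G1 := fun z : (X * X)%type => ((df z).1, (f z.1).2).
pose G2 := fun z : (X * X)%type => ((f z.1).1, (df z).2).
exists ((fun p : (F * F)%type => p.1 + p.2) \o
  (fun z => (b (G1 z).1 (G1 z).2, b (G2 z).1 (G2 z).2))); split.
  move=> x Ux y; apply: (deriv_b (v := df (x, y)) (Good_SC gX)) => //; last exact: Hd => //.
  by move: cf; rewrite continuous_open_subspace // => /(_ x); apply; rewrite inE.
have oUT : open (U `*` [set: X]) by exact: open_XT.
have Hfst : isCk k (U `*` [set: X]) (f \o fst).
  apply: (isCk_prelin (U := U)) => //.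
  - by move=> p; exact: cvg_fst.
  - by move=> z [].
have Hp : isCk k (U `*` [set: X]) (fun z => (df z, (f \o fst) z)) by exact: isCk_pair.
have gXX := Good_prod gX.
apply: isCk_postlin.
- by rewrite /linP => a [p1 p2] [q1 q2] /=; rewrite scalerDr addrACA.
- by move=> p; exact: (@add_continuous F p).
apply: isCk_pair.
  apply: (IH _ _ G1 gXX oUT).
  apply: (isCk_postlin (f := fun z => (df z, (f \o fst) z))
     (P := fun p : ((E1 * E2) * (E1 * E2))%type => (p.1.1, p.2.2))) => //.
  by apply: (@continuous_prodmap _ _ _ _ fst snd) => q; [exact: cvg_fst|exact: cvg_snd].
apply: (IH _ _ G2 gXX oUT).
apply: (isCk_postlin (f := fun z => (df z, (f \o fst) z))
   (P := fun p : ((E1 * E2) * (E1 * E2))%type => (p.2.1, p.1.2))) => //.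
move=> p; apply: cvg_pair.
  by apply: (@continuous_comp _ _ _ snd fst); [exact: cvg_snd|exact: cvg_fst].
by apply: (@continuous_comp _ _ _ fst snd); [exact: cvg_fst|exact: cvg_snd].
Qed.
End main.

Theorem theorem2p5 (R : realType) (c : bool) :
  (* case n = 0: X = U a topological space, f continuous *)
  (forall (X : topologicalType) (E1 E2 F : tvsType (KK R c))
     (b : E1 -> E2 -> F) (f : X -> (E1 * E2)%type),
     hausdorff_space E1 -> hausdorff_space E2 -> hausdorff_space F ->
     bilinear_map b -> continuous f ->
     (metrizable R X /\ seq_continuous2 b) \/
     (k_infty_space X /\
      exists S : set (set E2),
        (forall M, S M -> tvs_bounded M) /\
        (forall M, compact M -> S M) /\ hypocontinuous2 S b) ->
     continuous (fun x => b (f x).1 (f x).2)) /\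
  (* case n >= 1 (including n = oo): X a locally convex space, U open *)
  (forall (n : ninf) (X E1 E2 F : tvsType (KK R c)) (U : set X)
     (b : E1 -> E2 -> F) (f : X -> (E1 * E2)%type),
     n <> Fin 0 ->
     hausdorff_space X -> hausdorff_space E1 -> hausdorff_space E2 ->
     hausdorff_space F -> open U ->
     bilinear_map b -> isCn n U f ->
     (metrizable R X /\ seq_continuous2 b) \/
     (k_infty_space X /\
      exists S : set (set E2),
        (forall M, S M -> tvs_bounded M) /\
        (forall M, compact M -> S M) /\ hypocontinuous2 S b) ->
     isCn n U (fun x => b (f x).1 (f x).2)).
Proof.
split.
  move=> X E1 E2 F b f hE1 hE2 hF bb cf Hab x.
  case: Hab => [[mX sc]|[kX [S [bS [cS hS]]]]].
    by apply: cont_FC => //; [move: mX; apply: metrizable_FC|exact: cf].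
  apply: (@cont_K _ _ _ _ b bb S hS X setT f ((kX.2 0%N).2) cS) => //.
    by move=> z _; exists setT; split; [exact: filterT|exact: closedT|].
  by move=> z _; exact: cf.
move=> n X E1 E2 F U b f hn hX hE1 hE2 hF oU bb Hf Hab.
have gX : Good b X.
  case: Hab => [[mX sc]|[kX [S [bS [cS hS]]]]]; [left|right]; split => //.
    by move: mX; apply: metrizable_FC.
  exists X, 0%N, id; split; first exact: homeo_id.
    by move=> m; exact: (kX.2 m).2.
  by exists S.
case: n hn Hf => [k|] _ Hf /=.
  exact: (main_isCk bb (@archKK R c)).
by move=> k; exact: (main_isCk bb (@archKK R c)).
Qed.
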